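(* Let $d\ge2$, let $N^+=\frac{(d-1)\sqrt{d+1}-1}{d}$, and let $\{Q_j\}_{j=1}^{d^2}$ be an NQPR in dimension $d$. Then the number of density operators $\rho$ on $\mathbb{C}^d$ with $N(\rho)=N^+$ is at most $d^2$, and equals $d^2$ if and only if there is a SIC $\{\Pi_j\}_{j=1}^{d^2}$ such that $Q_j=Q_j^+$ for all $j$.
   Context: An NQPR in dimension $d$ is a family $\{Q_j\}_{j=1}^{d^2}$ of Hermitian operators on $\mathbb{C}^d$ with $\operatorname{tr}(Q_j)=1$ and $\operatorname{tr}(Q_jQ_k)=d\,\delta_{jk}$. The negativity of a density operator $\rho$ with respect to $\{Q_j\}$ is $N(\rho)=\max\{0,-\min_j\operatorname{tr}(\rho Q_j)\}$. A SIC in dimension $d$ is a set $\{\Pi_j\}_{j=1}^{d^2}$ of rank-one projectors with $\operatorname{tr}(\Pi_j\Pi_k)=(d\delta_{jk}+1)/(d+1)$; given a SIC, $Q_j^+=-\sqrt{d+1}\,\Pi_j+\frac{1}{d}(1+\sqrt{d+1})$, with $1$ the identity in the operator term. *)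

(* Defs.v *)
From mathcomp Require Import all_boot all_order all_algebra.
From mathcomp Require Import reals complex.
Set Implicit Arguments. Unset Strict Implicit. Unset Printing Implicit Defensive.
Import Order.TTheory GRing.Theory Num.Theory.
Local Open Scope ring_scope.
Local Open Scope complex_scope.

Section QDefs.
Variable R : realType.
Local Notation C := R[i].

Definition adj (m n : nat) (A : 'M[C]_(m, n)) : 'M[C]_(n, m) := (map_mx conjc A)^T.

Definition hermitian (d : nat) (A : 'M[C]_d) : Prop := adj A = A.

Definition psd (d : nat) (A : 'M[C]_d) : Prop :=
  forall v : 'cV[C]_d, (0 : C) <= ((adj v) *m A *m v) 0 0.

Definition density (d : nat) (rho : 'M[C]_d) : Prop :=
  hermitian rho /\ psd rho /\ \tr rho = 1.

Definition NQPR (d : nat) (Q : 'I_(d ^ 2) -> 'M[C]_d) : Prop :=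
  (forall j, hermitian (Q j)) /\
  (forall j, \tr (Q j) = 1) /\
  (forall j k, \tr (Q j *m Q k) = (d%:R * (j == k)%:R)).

(* negativity: max{0, - min_j tr(rho Q_j)}; tr(rho Q_j) is real for Hermitian
   rho, Q_j, so we take its real part *)
Definition negativity (d : nat) (Q : 'I_(d ^ 2) -> 'M[C]_d) (rho : 'M[C]_d) : R :=
  \big[Num.max/0]_(j < d ^ 2) (- complex.Re (\tr (rho *m Q j))).

Definition SIC (d : nat) (P : 'I_(d ^ 2) -> 'M[C]_d) : Prop :=
  (forall j, hermitian (P j) /\ P j *m P j = P j /\ \rank (P j) = 1%N) /\
  (forall j k, \tr (P j *m P k) = (d%:R * (j == k)%:R + 1) / (d%:R + 1)).

Definition Qplus (d : nat) (P : 'I_(d ^ 2) -> 'M[C]_d) (j : 'I_(d ^ 2)) : 'M[C]_d :=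
  - ((Num.sqrt (d%:R + 1 : R))%:C *: P j)
  + ((d%:R : C)^-1 * (1 + (Num.sqrt (d%:R + 1 : R))%:C)) *: 1%:M.

Definition Nplus (d : nat) : R :=
  ((d%:R - 1) * Num.sqrt (d%:R + 1) - 1) / d%:R.

End QDefs.

(* Main.v *)
Require Import Defs.
From mathcomp Require Import all_boot all_order all_algebra.
From mathcomp Require Import reals complex spectral ring lra.
Import Order.TTheory GRing.Theory Num.Theory.
Set Implicit Arguments. Unset Strict Implicit.
Local Open Scope ring_scope.
Local Open Scope complex_scope.
Section S.
Variable R : realType.
Local Notation C := R[i].
Implicit Types (n : nat).

Lemma adjM m n p (A : 'M[C]_(m, n)) (B : 'M[C]_(n, p)) : adj (A *m B) = adj B *m adj A.
Proof. by rewrite /adj (map_mxM (@Num.conj C)) trmx_mul. Qed.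

Lemma adjK m n (A : 'M[C]_(m, n)) : adj (adj A) = A.
Proof. by apply/matrixP=> i j; rewrite !mxE conjcK. Qed.

Lemma tr_adj n (A : 'M[C]_n) : \tr (adj A) = (\tr A)^*%C.
Proof.
rewrite /adj mxtrace_tr /mxtrace (rmorph_sum (@Num.conj C)).
by apply: eq_bigr => i _; rewrite mxE.
Qed.

Lemma tr_real n (A B : 'M[C]_n) : Defs.hermitian A -> Defs.hermitian B ->
  \tr (A *m B) = (complex.Re (\tr (A *m B)))%:C.
Proof.
move=> hA hB; have cj : (\tr (A *m B))^*%C = \tr (A *m B).
  by rewrite -tr_adj adjM hA hB mxtrace_mulC.
move: cj; case: (\tr (A *m B)) => a b /= [] /eqP.
move=> /eqP h; have -> : b = 0 by lra.
by [].
Qed.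

Lemma tr_adj_sum n (B : 'M[C]_n) :
  \tr (B *m adj B) = \sum_i \sum_j B i j * (B i j)^*%C.
Proof. by apply: eq_bigr => i _; rewrite mxE; apply: eq_bigr => j _; rewrite !mxE. Qed.

Lemma tr_adj_ge0 n (B : 'M[C]_n) : 0 <= \tr (B *m adj B).
Proof.
by rewrite tr_adj_sum; apply: sumr_ge0 => i _; apply: sumr_ge0 => j _; apply: mulcJ_ge0.
Qed.

Lemma tr_adj_eq0 n (B : 'M[C]_n) : \tr (B *m adj B) = 0 -> B = 0.
Proof.
rewrite tr_adj_sum => /psumr_eq0P H.
have {}H : forall i, \sum_j B i j * (B i j)^*%C = 0.
  by move=> i; apply: H => // k _; apply: sumr_ge0 => j _; apply: mulcJ_ge0.
apply/matrixP => i j; rewrite mxE.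
have /psumr_eq0P H2 := H i.
have := H2 (fun k _ => mulcJ_ge0 _) j isT.
move/eqP; rewrite mulf_eq0 conjc_eq0 orbb.
by move/eqP.
Qed.
Lemma adj_tstar m n (A : 'M[C]_(m, n)) : map_mx Num.conj A^T = adj A.
Proof. by rewrite /adj map_trmx. Qed.

Lemma adj_delta n (k : 'I_n) : adj (delta_mx k 0 : 'cV[C]_n) = delta_mx 0 k.
Proof.
apply/matrixP => i j; rewrite !mxE andbC.
case: (_ && _) => /=.
  by apply/eqP; rewrite eq_complex /= oppr0 !eqxx.
by apply/eqP; rewrite eq_complex /= oppr0 !eqxx.
Qed.

Lemma density_tr2 n (rho : 'M[C]_n) : density rho ->
  \tr (rho *m rho) <= 1 /\
  (\tr (rho *m rho) = 1 -> rho *m rho = rho /\ \rank rho = 1%N).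
Proof.
move=> [hr [pr tr1]].
have nr : rho \is normalmx.
  by apply/normalmxP; rewrite adj_tstar hr.
set P := spectralmx rho; set x := spectral_diag rho.
have erho : rho = invmx P *m diag_mx x *m P by apply/orthomx_spectralP.
have Pu : P \in unitmx := spectral_unit rho.
have PaE : invmx P = adj P.
  by rewrite invmx_unitary ?spectral_unitarymx // adj_tstar.
have PPa : P *m invmx P = 1%:M by rewrite mulmxV.
have PaP : invmx P *m P = 1%:M by rewrite mulVmx.
have xge0 : forall k, 0 <= x 0 k.
  move=> k; have := pr (invmx P *m delta_mx k 0).
  rewrite adjM {1}PaE adjK erho !mulmxA.
  rewrite -[_ *m P *m invmx P]mulmxA PPa mulmx1 -[_ *m P *m invmx P]mulmxA PPa mulmx1.
  by rewrite adj_delta -rowE -colE !mxE eqxx mulr1n.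
have rr : forall y, invmx P *m diag_mx y *m P *m (invmx P *m diag_mx y *m P)
    = invmx P *m diag_mx (\row_j (y 0 j * y 0 j)) *m P.
  move=> y; rewrite !mulmxA -[invmx P *m diag_mx y *m P *m invmx P]mulmxA PPa mulmx1.
  by rewrite -[_ *m diag_mx y *m diag_mx y]mulmxA mulmx_diag.
have trD : forall y, \tr (invmx P *m diag_mx y *m P) = \sum_j y 0 j.
  by move=> y; rewrite mxtrace_mulC mulmxA PPa mul1mx mxtrace_diag.
have sx : \sum_j x 0 j = 1 by rewrite -trD -erho.
have xle1 : forall k, x 0 k <= 1.
  move=> k; rewrite -sx (bigD1 k) //= lerDl; exact: sumr_ge0.
have sq : \tr (rho *m rho) = \sum_j x 0 j * x 0 j.
  by rewrite erho rr trD; apply: eq_bigr => j _; rewrite mxE.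
split.
  rewrite sq -sx; apply: ler_sum => j _; exact: ler_piMr.
move=> e.
have xx : forall j, x 0 j * x 0 j = x 0 j.
  have : \sum_j (x 0 j - x 0 j * x 0 j) = 0 by rewrite sumrB sx -sq e subrr.
  move=> /psumr_eq0P H j; apply/eqP; rewrite eq_sym -subr_eq0; apply/eqP.
  apply: H => // i _; rewrite subr_ge0; exact: ler_piMr.
have xrow : \row_j (x 0 j * x 0 j) = x.
  by apply/rowP => j; rewrite mxE xx.
split; first by rewrite erho rr xrow.
case: (boolP [exists k, x 0 k != 0]) => [/existsP [k xk]|/existsPn H]; last first.
  move: sx; rewrite big1 => [/eqP|k _].
    by rewrite eq_sym oner_eq0.
  by apply/eqP; move: (H k); rewrite negbK.
have xk1 : x 0 k = 1 by apply: (mulIf xk); rewrite mul1r xx.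
have x0 : forall j, j != k -> x 0 j = 0.
  have : \sum_(j | j != k) x 0 j = 0.
    by move: sx; rewrite (bigD1 k) //= xk1 => /(congr1 (fun z => z - 1)); rewrite addrC addrK subrr.
  by move=> /psumr_eq0P; apply => j _.
have De : diag_mx x = delta_mx k k.
  apply/matrixP => i j; rewrite !mxE.
  case: (eqVneq i k) => [->|ik] /=; first by rewrite xk1 eq_sym.
  by rewrite x0 // mul0rn.
rewrite erho De mxrankMfree ?row_free_unit //.
rewrite -mxrank_tr trmx_mul mxrankMfree ?row_free_unit ?unitmx_tr ?unitmx_inv //.
by rewrite mxrank_tr mxrank_delta.
Qed.
End S.

Section S2.
Variable R : realType.
Local Notation C := R[i].

Lemma adjD n (A B : 'M[C]_n) : adj (A + B) = adj A + adj B.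
Proof. by apply/matrixP=> i j; rewrite !mxE rmorphD. Qed.
Lemma adjN n (A : 'M[C]_n) : adj (- A) = - adj A.
Proof. by apply/matrixP=> i j; rewrite !mxE rmorphN. Qed.
Lemma adjZ n (a : C) (A : 'M[C]_n) : adj (a *: A) = a^*%C *: adj A.
Proof. by apply/matrixP=> i j; rewrite !mxE rmorphM. Qed.
Lemma adj_scalar n (a : C) : adj (a%:M : 'M[C]_n) = (a^*%C)%:M.
Proof. by apply/matrixP=> i j; rewrite !mxE rmorphMn eq_sym. Qed.

Lemma tr_expand n (rho A : 'M[C]_n) (c m : C) :
  \tr ((rho + c *: (A - m%:M)) *m (rho + c *: (A - m%:M))) =
  \tr (rho *m rho) + 2 * c * (\tr (rho *m A) - m * \tr rho)
  + c ^+ 2 * (\tr (A *m A) - 2 * m * \tr A + m ^+ 2 * n%:R).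
Proof.
rewrite !(mulmxDl, mulmxDr) -!scalemxAl -!scalemxAr !(mulmxBl, mulmxBr).
rewrite !(mul_mx_scalar, mul_scalar_mx).
rewrite !(mxtraceD, mxtraceZ, raddfB) /= ?mxtraceZ.
rewrite [\tr (A *m rho)]mxtrace_mulC !raddfN /= opprK !mxtraceZ mxtrace_scalar.
rewrite -mulr_natr.
ring.
Qed.

Definition sq (d : nat) : R := Num.sqrt (d%:R + 1).
Definition mu (d : nat) : R := (1 + sq d) / d%:R.
Definition rhoQ (d : nat) (A : 'M[C]_d) : 'M[C]_d :=
  - (((sq d)^-1)%:C *: (A - ((mu d)%:C)%:M)).

Lemma sq_gt0 d : 0 < sq d.
Proof. by rewrite sqrtr_gt0 ltr_wpDl. Qed.

Lemma sq2 d : sq d ^+ 2 = d%:R + 1.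
Proof. by rewrite sqr_sqrtr // addr_ge0. Qed.

Lemma mu_key d : (0 < d)%N -> d%:R * mu d ^+ 2 - 2 * mu d = 1.
Proof.
move=> d0; have dn : (d%:R : R) != 0 by rewrite pnatr_eq0 -lt0n.
rewrite /mu; have := sq2 d; set s := sq d => hs.
have -> : d%:R * ((1 + s) / d%:R) ^+ 2 - 2 * ((1 + s) / d%:R) = (s ^+ 2 - 1) / d%:R.
  by field.
by rewrite hs addrK divff.
Qed.


Lemma herm_shift n (rho A : 'M[C]_n) (c m : R) :
  Defs.hermitian rho -> Defs.hermitian A ->
  Defs.hermitian (rho + c%:C *: (A - (m%:C)%:M)).
Proof.
move=> hr hA; rewrite /Defs.hermitian adjD adjZ adjD adjN adj_scalar hr hA.
by rewrite !conjc_real.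
Qed.

Lemma rc_expand (qr w t m : R) (d : nat) :
  qr%:C + 2 * w%:C * (t%:C - m%:C * 1) + w%:C ^+ 2 * (d%:R - 2 * m%:C * 1 + m%:C ^+ 2 * d%:R)
  = (qr + 2 * w * (t - m) + w ^+ 2 * (d%:R - 2 * m + m ^+ 2 * d%:R))%:C.
Proof.
rewrite !(rmorphD, rmorphM, rmorphB, rmorphXn, rmorph_nat, rmorphN).
ring.
Qed.

Lemma bound d (A rho : 'M[C]_d) : (0 < d)%N ->
  Defs.hermitian A -> \tr A = 1 -> \tr (A *m A) = d%:R -> density rho ->
  mu d - sq d <= complex.Re (\tr (rho *m A)) /\
  (complex.Re (\tr (rho *m A)) = mu d - sq d -> rho = rhoQ A).
Proof.
move=> d0 hA trA trAA drho.
have [hr [pr tr1]] := drho.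
have [q1 _] := density_tr2 drho.
set s := sq d; set m := mu d; set w := s^-1.
set B := rho + w%:C *: (A - (m%:C)%:M).
have hB : Defs.hermitian B := herm_shift w m hr hA.
have Bge0 : 0 <= \tr (B *m B) by rewrite -{2}hB; exact: tr_adj_ge0.
set qr := complex.Re (\tr (rho *m rho)); set t := complex.Re (\tr (rho *m A)).
have qE : \tr (rho *m rho) = qr%:C := tr_real hr hr.
have tE : \tr (rho *m A) = t%:C := tr_real hr hA.
have qr1 : qr <= 1 by rewrite -lecR -qE.
have s0 : 0 < s := sq_gt0 d.
have ws : w * s = 1 by rewrite mulVf // gt_eqF.
have key : d%:R * m ^+ 2 - 2 * m = 1 := mu_key d0.
have hs : s ^+ 2 = d%:R + 1 := sq2 d.
have BE : \tr (B *m B) = (qr + 2 * w * (t - m) + w ^+ 2 * (d%:R - 2 * m + m ^+ 2 * d%:R))%:C.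
  rewrite /B tr_expand qE tE trA trAA tr1.
  by rewrite rc_expand.
have c1 : w ^+ 2 * (d%:R - 2 * m + m ^+ 2 * d%:R) = 1.
  have -> : d%:R - 2 * m + m ^+ 2 * d%:R = s ^+ 2.
    have -> : d%:R - 2 * m + m ^+ 2 * d%:R = d%:R + (d%:R * m ^+ 2 - 2 * m) by ring.
    by rewrite key hs.
  by rewrite -exprMn ws expr1n.
move: Bge0; rewrite BE c1 ler0c => Bge0.
have wu : -1 <= w * (t - m) by nra.
have tmE : t - m = s * (w * (t - m)) by rewrite mulrA (mulrC s) ws mul1r.
split.
  have : - s <= s * (w * (t - m)) by rewrite -(mulrN1 s) ler_pM2l.
  rewrite -tmE; lra.
move=> te.
have wte : w * (t - m) = -1 by rewrite te addrAC subrr add0r mulrN ws.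
have B0 : \tr (B *m B) = 0.
  rewrite BE c1 -mulrA wte; congr (_%:C).
  lra.
have := tr_adj_eq0 (B := B); rewrite hB => /(_ B0) /eqP.
rewrite /B /rhoQ addr_eq0 => /eqP ->.
by [].
Qed.

End S2.

Section S3.
Variable R : realType.
Local Notation C := R[i].

Lemma NplusE d : (0 < d)%N -> Nplus R d = sq R d - mu R d.
Proof.
move=> d0; have dn : (d%:R : R) != 0 by rewrite pnatr_eq0 -lt0n.
rewrite /Nplus /mu -/(sq R d); field => //.
Qed.

Lemma Nplus_gt0 d : (2 <= d)%N -> 0 < Nplus R d.
Proof.
move=> d2; have d0 : (0 < d)%N by apply: leq_trans d2.
rewrite NplusE // /mu.
have hs := sq2 R d; have s0 := sq_gt0 R d.
have dge : (2 : R) <= d%:R by rewrite (ler_nat R 2 d).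
set s := sq R d in hs s0 *.
have s1 : 1 < s by nra.
have dp : 0 < (d%:R : R) by lra.
rewrite subr_gt0 ltr_pdivrMr //.
nra.
Qed.

Lemma rhoQ_alt d (A : 'M[C]_d) :
  rhoQ A = ((sq R d)^-1)%:C *: (((mu R d)%:C)%:M - A).
Proof. by rewrite /rhoQ -scalerN opprB. Qed.

Lemma ws d : (sq R d)^-1 * sq R d = 1.
Proof. by rewrite mulVf // gt_eqF // sq_gt0. Qed.

Lemma wsC d : ((sq R d)^-1)%:C * (sq R d)%:C = 1.
Proof. by rewrite -rmorphM ws. Qed.

Lemma rhoQ_plus d (P : 'M[C]_d) :
  rhoQ (((mu R d)%:C)%:M - (sq R d)%:C *: P) = P.
Proof.
by rewrite rhoQ_alt opprB addrC subrK scalerA wsC scale1r.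
Qed.

Lemma plus_rhoQ d (A : 'M[C]_d) :
  ((mu R d)%:C)%:M - (sq R d)%:C *: rhoQ A = A.
Proof.
by rewrite rhoQ_alt scalerA mulrC wsC scale1r opprB addrC subrK.
Qed.

Lemma muC d : (0 < d)%N -> (mu R d)%:C = (d%:R : C)^-1 * (1 + (sq R d)%:C).
Proof.
move=> d0; rewrite /mu rmorphM fmorphV rmorphD rmorph1 rmorph_nat mulrC.
by [].
Qed.

Lemma QplusE d (P : 'I_(d ^ 2) -> 'M[C]_d) j : (0 < d)%N ->
  Qplus P j = ((mu R d)%:C)%:M - (sq R d)%:C *: P j.
Proof.
move=> d0; rewrite /Qplus -/(sq R d) -muC // scalemx1 addrC.
by [].
Qed.


Lemma tr_expand2 n (A B : 'M[C]_n) (c m : C) :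
  \tr ((c *: (m%:M - A)) *m (c *: (m%:M - B))) =
  c ^+ 2 * (m ^+ 2 * n%:R - m * \tr A - m * \tr B + \tr (A *m B)).
Proof.
rewrite -scalemxAl -scalemxAr !(mulmxBl, mulmxBr).
rewrite !(mul_mx_scalar, mul_scalar_mx).
rewrite !(mxtraceD, mxtraceZ, raddfB) /= ?mxtraceZ.
rewrite !raddfN /= !mxtraceZ mxtrace_scalar -mulr_natr.
ring.
Qed.

Lemma keyC d : (0 < d)%N ->
  d%:R * ((mu R d)%:C) ^+ 2 - 2 * (mu R d)%:C = 1 :> C.
Proof.
move=> d0; have := congr1 (real_complex R) (mu_key R d0).
rewrite !(rmorphB, rmorphM, rmorphXn, rmorph_nat, rmorph1).
by rewrite expr2.
Qed.

Lemma w2C d : ((sq R d)^-1)%:C ^+ 2 = (d%:R + 1 : C)^-1.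
Proof.
by rewrite -rmorphXn exprVn sq2 fmorphV rmorphD rmorph_nat rmorph1.
Qed.

Lemma tr_rhoQ2 d (A B : 'M[C]_d) : (0 < d)%N -> \tr A = 1 -> \tr B = 1 ->
  \tr (rhoQ A *m rhoQ B) = (\tr (A *m B) + 1) / (d%:R + 1).
Proof.
move=> d0 tA tB; rewrite !rhoQ_alt tr_expand2 tA tB w2C.
have e : ((mu R d)%:C) ^+ 2 * d%:R - (mu R d)%:C * 1 - (mu R d)%:C * 1 + \tr (A *m B)
  = \tr (A *m B) + (d%:R * ((mu R d)%:C) ^+ 2 - 2 * (mu R d)%:C) by ring.
by rewrite e keyC // mulrC.
Qed.

Lemma w_id d : (0 < d)%N -> (sq R d)^-1 * (mu R d - d%:R) = mu R d - sq R d.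
Proof.
move=> d0; have dn : (d%:R : R) != 0 by rewrite pnatr_eq0 -lt0n.
have hs := sq2 R d; have s0 := sq_gt0 R d.
have sn : sq R d != 0 by rewrite gt_eqF.
rewrite /mu; set s := sq R d in hs s0 sn *.
apply: (mulfI sn); rewrite mulrA divff // mul1r.
have -> : s * ((1 + s) / d%:R - s) = (s + s ^+ 2) / d%:R - s ^+ 2 by field.
rewrite hs; field => //.
Qed.

Lemma tr_rhoQ_A d (A : 'M[C]_d) : (0 < d)%N -> \tr A = 1 -> \tr (A *m A) = d%:R ->
  complex.Re (\tr (rhoQ A *m A)) = mu R d - sq R d.
Proof.
move=> d0 tA tAA.
rewrite rhoQ_alt -scalemxAl mulmxBl mul_scalar_mx mxtraceZ raddfB /= mxtraceZ tA tAA.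
have -> : ((sq R d)^-1)%:C * ((mu R d)%:C * 1 - d%:R) = ((sq R d)^-1 * (mu R d - d%:R))%:C.
  rewrite [RHS]rmorphM; congr (_ * _); rewrite [RHS]rmorphB rmorph_nat mulr1.
  by [].
by rewrite w_id.
Qed.
End S3.

Section S4.
Variable R : realType.
Local Notation C := R[i].

Lemma psd_proj n (P : 'M[C]_n) : Defs.hermitian P -> P *m P = P -> psd P.
Proof.
move=> hP PP v.
have -> : adj v *m P *m v = adj (P *m v) *m (P *m v).
  by rewrite adjM hP !mulmxA -[adj v *m P *m P]mulmxA PP.
rewrite mxE; apply: sumr_ge0 => i _; rewrite !mxE mulrC; exact: mulcJ_ge0.
Qed.

Lemma charN d (Q : 'I_(d ^ 2) -> 'M[C]_d) rho : (2 <= d)%N -> NQPR Q ->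
  density rho -> (negativity Q rho = Nplus R d <-> exists j, rho = rhoQ (Q j)).
Proof.
move=> d2 [hQ [trQ trQQ]] dr.
have d0 : (0 < d)%N by apply: leq_trans d2.
have trQQj j : \tr (Q j *m Q j) = d%:R by rewrite trQQ eqxx mulr1.
have Np0 := Nplus_gt0 R d2; have NpE := NplusE R d0.
have le j : - complex.Re (\tr (rho *m Q j)) <= Nplus R d.
  have [h _] := bound d0 (hQ j) (trQ j) (trQQj j) dr; rewrite NpE; lra.
split.
  move=> hN.
  case: (boolP [exists j, rho == rhoQ (Q j)]) => [/existsP [j /eqP e]|/existsPn H].
    by exists j.
  exfalso; suff : negativity Q rho < Nplus R d by rewrite hN ltxx.
  rewrite /negativity; apply: bigmax_lt => // j _.
  rewrite lt_neqAle le andbT; apply/eqP => e.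
  have [_ h] := bound d0 (hQ j) (trQ j) (trQQj j) dr.
  have /negP := H j; apply; apply/eqP; apply: h; rewrite NpE in e; lra.
move=> [j e]; apply/eqP; rewrite eq_le; apply/andP; split.
  apply: bigmax_le => [|i _]; [exact: ltW | exact: le].
apply: le_trans (le_bigmax _ _ j).
by rewrite e tr_rhoQ_A // NpE opprB.
Qed.
End S4.

Theorem theorem2 (R : realType) (d : nat) (Q : 'I_(d ^ 2) -> 'M[R[i]]_d) :
  (2 <= d)%N -> NQPR Q ->
  (forall s : seq 'M[R[i]]_d, uniq s ->
     (forall rho, rho \in s -> density rho /\ negativity Q rho = Nplus R d) ->
     (size s <= d ^ 2)%N) /\
  ((exists s : seq 'M[R[i]]_d, uniq s /\ size s = (d ^ 2)%N /\
      (forall rho, (density rho /\ negativity Q rho = Nplus R d) <-> rho \in s))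
   <->
   (exists P : 'I_(d ^ 2) -> 'M[R[i]]_d, SIC P /\ forall j, Q j = Qplus P j)).
Proof.
move=> d2 nQ; have [hQ [trQ trQQ]] := nQ.
have d0 : (0 < d)%N by apply: leq_trans d2.
have trQQj j : \tr (Q j *m Q j) = d%:R by rewrite trQQ eqxx mulr1.
set f := fun j => rhoQ (Q j).
set L := [seq f j | j <- enum 'I_(d ^ 2)].
have sizeL : size L = (d ^ 2)%N by rewrite size_map size_enum_ord.
have sub : forall s : seq 'M[R[i]]_d,
    (forall rho, rho \in s -> density rho /\ negativity Q rho = Nplus R d) ->
    {subset s <= L}.
  move=> s hs rho /hs [dr /(charN d2 nQ dr) [j ->]].
  by apply: map_f; rewrite mem_enum.
have dnz : (d%:R + 1 : R[i]) != 0 by rewrite -(natrD _ d 1) pnatr_eq0 addn1.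
split.
  move=> s us hs; rewrite -sizeL; exact: uniq_leq_size (sub s hs).
split.
  move=> [s [us [ss hs]]].
  have sub' := sub s (fun rho => (iffRL (hs rho))).
  have [_ eqs] : ((size s = size L) * (s =i L))%type.
    by apply: uniq_min_size us sub' _; rewrite sizeL ss.
  have fin : forall j, f j \in s by move=> j; rewrite eqs; apply: map_f; rewrite mem_enum.
  have fd : forall j, density (f j) by move=> j; have /hs [] := fin j.
  exists f; split; last first.
    by move=> j; rewrite QplusE // plus_rhoQ.
  have trf : forall j k, \tr (f j *m f k) = (d%:R * (j == k)%:R + 1) / (d%:R + 1).
    by move=> j k; rewrite /f tr_rhoQ2 // trQQ.
  split=> [j|//].
  have [hf _] := fd j.
  have [_ h] := density_tr2 (fd j).
  have [e1 e2] : f j *m f j = f j /\ \rank (f j) = 1%N.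
    by apply: h; rewrite trf eqxx mulr1 divff.
  by [].
move=> [P [[PP Ptr] QE]].
have fP : forall j, f j = P j by move=> j; rewrite /f QE QplusE // rhoQ_plus.
have Pd : forall j, density (P j).
  move=> j; have [h1 [h2 h3]] := PP j.
  split => //; split; first exact: psd_proj.
  by rewrite -h2 Ptr eqxx mulr1 divff.
have Pinj : injective P.
  move=> j k e; have := Ptr j k; rewrite -e Ptr eqxx mulr1.
  case: (eqVneq j k) => // _; rewrite mulr0 add0r => /(congr1 (fun x => x * (d%:R + 1))).
  rewrite !mulfVK // => /eqP; rewrite -(natrD _ d 1) (eqr_nat _ (d + 1)%N 1) addn1.
  by rewrite eqSS => /eqP d00; rewrite d00 in d0.
exists [seq P j | j <- enum 'I_(d ^ 2)]; split.
  by rewrite (map_inj_uniq Pinj) enum_uniq.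
split; first by rewrite size_map size_enum_ord.
move=> rho; split.
  move=> [dr /(charN d2 nQ dr) [j ->]].
  by rewrite -/(f j) fP; apply: map_f; rewrite mem_enum.
move=> /mapP [j _ ->]; split; first exact: Pd.
by apply/(charN d2 nQ (Pd j)); exists j; rewrite -fP.
Qed.
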